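(* Let $A\in\mathbb{N}^{n\times m}$ have distinct columns. For $k\in[m]$ define $$C_{\mathrm{POLY\text{-}AGE}}(A,k)=\{c\in\mathbb{R}^m:\ \mathrm{Poly}(A,c)(x)\ge 0\ \forall x\in\mathbb{R}^n,\ c_i\ge 0\ \forall i\ne k,\ c_i=0\text{ for all } i\ne k\text{ with } a_i\notin(2\mathbb{N})^n\}.$$ Then $\sum_{k=1}^m C_{\mathrm{POLY\text{-}AGE}}(A,k)=C_{\mathrm{POLY\text{-}SAGE}}(A)$.
   Context: For $A\in\mathbb{N}^{n\times m}$ with distinct columns $a_i$ and $c\in\mathbb{R}^m$, $\mathrm{Poly}(A,c)$ is the polynomial $x\mapsto\sum_{i=1}^m c_i x^{a_i}$ on $\mathbb{R}^n$; a column $a_i$ is even if $a_i\in(2\mathbb{N})^n$. $\mathrm{Sig}(A,c)$ is $x\mapsto\sum_i c_i\exp(a_i^\top x)$; $C_{\mathrm{NNS}}(A)=\{c:\mathrm{Sig}(A,c)\ge 0\text{ on }\mathbb{R}^n\}$; $C_{\mathrm{AGE}}(A,k)=\{c\in C_{\mathrm{NNS}}(A): c_i\ge 0\ \forall i\ne k\}$; $C_{\mathrm{SAGE}}(A)=\sum_k C_{\mathrm{AGE}}(A,k)$. The signomial representative of $c$ is $\hat c\in\mathbb{R}^m$ with $\hat c_i=c_i$ if $a_i$ is even and $\hat c_i=-|c_i|$ otherwise; $C_{\mathrm{POLY\text{-}SAGE}}(A)=\{c\in\mathbb{R}^m:\hat c\in C_{\mathrm{SAGE}}(A)\}$. *)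

(* Defs.v *)
From Stdlib Require Import Reals List Arith.
Open Scope R_scope.

(* Conventions: A : nat -> nat -> nat, A r i = entry in row r (r < n), column i (i < m).
   Vectors c : nat -> R (only indices < m matter), points x : nat -> R (only indices < n). *)

Fixpoint rsum (k : nat) (f : nat -> R) : R :=
  match k with O => 0 | S k' => rsum k' f + f k' end.

Fixpoint rprod (k : nat) (f : nat -> R) : R :=
  match k with O => 1 | S k' => rprod k' f * f k' end.

Definition distinct_cols (n m : nat) (A : nat -> nat -> nat) : Prop :=
  forall i j, (i < m)%nat -> (j < m)%nat -> i <> j ->
    exists r, (r < n)%nat /\ A r i <> A r j.

Definition Poly (n m : nat) (A : nat -> nat -> nat) (c : nat -> R) (x : nat -> R) : R :=
  rsum m (fun i => c i * rprod n (fun r => x r ^ A r i)).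

Definition Sig (n m : nat) (A : nat -> nat -> nat) (c : nat -> R) (x : nat -> R) : R :=
  rsum m (fun i => c i * exp (rsum n (fun r => INR (A r i) * x r))).

Definition even_col (n : nat) (A : nat -> nat -> nat) (i : nat) : bool :=
  forallb (fun r => Nat.even (A r i)) (seq 0 n).

Definition C_NNS (n m : nat) (A : nat -> nat -> nat) (c : nat -> R) : Prop :=
  forall x : nat -> R, 0 <= Sig n m A c x.

Definition C_AGE (n m : nat) (A : nat -> nat -> nat) (k : nat) (c : nat -> R) : Prop :=
  C_NNS n m A c /\ (forall i, (i < m)%nat -> i <> k -> 0 <= c i).

(* Minkowski sum over k in [m] (indices 0..m-1) of a family of cones *)
Definition cone_sum (m : nat) (C : nat -> (nat -> R) -> Prop) (c : nat -> R) : Prop :=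
  exists cs : nat -> nat -> R,
    (forall k, (k < m)%nat -> C k (cs k)) /\
    (forall i, (i < m)%nat -> c i = rsum m (fun k => cs k i)).

Definition C_SAGE (n m : nat) (A : nat -> nat -> nat) (c : nat -> R) : Prop :=
  cone_sum m (C_AGE n m A) c.

Definition sig_rep (n : nat) (A : nat -> nat -> nat) (c : nat -> R) : nat -> R :=
  fun i => if even_col n A i then c i else - Rabs (c i).

Definition C_POLY_SAGE (n m : nat) (A : nat -> nat -> nat) (c : nat -> R) : Prop :=
  C_SAGE n m A (sig_rep n A c).

Definition C_POLY_AGE (n m : nat) (A : nat -> nat -> nat) (k : nat) (c : nat -> R) : Prop :=
  (forall x : nat -> R, 0 <= Poly n m A c x) /\
  (forall i, (i < m)%nat -> i <> k -> 0 <= c i) /\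
  (forall i, (i < m)%nat -> i <> k -> even_col n A i = false -> c i = 0).

(* Main.v *)
Require Import Defs.
From Stdlib Require Import Reals List Arith Lra Lia Classical.
Open Scope R_scope.

Lemma rsum_ext k f g : (forall i, (i < k)%nat -> f i = g i) -> rsum k f = rsum k g.
Proof. induction k; simpl; intros H; auto. rewrite IHk by (intros; apply H; lia). rewrite H by lia. ring. Qed.

Lemma rprod_ext k f g : (forall i, (i < k)%nat -> f i = g i) -> rprod k f = rprod k g.
Proof. induction k; simpl; intros H; auto. rewrite IHk by (intros; apply H; lia). rewrite H by lia. ring. Qed.

Lemma rsum_plus k f g : rsum k (fun i => f i + g i) = rsum k f + rsum k g.
Proof. induction k; simpl; [ring|rewrite IHk; ring]. Qed.

Lemma rsum_scal k a f : rsum k (fun i => a * f i) = a * rsum k f.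
Proof. induction k; simpl; [ring|rewrite IHk; ring]. Qed.

Lemma rsum_le k f g : (forall i, (i < k)%nat -> f i <= g i) -> rsum k f <= rsum k g.
Proof. induction k; simpl; intros H; [lra|]. assert (H1 := H k ltac:(lia)). assert (rsum k f <= rsum k g) by (apply IHk; intros; apply H; lia). lra. Qed.

Lemma rsum_single k f i : (i < k)%nat -> (forall j, (j < k)%nat -> j <> i -> f j = 0) -> rsum k f = f i.
Proof.
  induction k; simpl; intros Hi H; [lia|].
  destruct (Nat.eq_dec i k) as [->|Hne].
  - rewrite (rsum_ext k f (fun _ => 0)). 2:{ intros; apply H; lia. }
    clear. assert (rsum k (fun _ => 0) = 0) by (induction k; simpl; lra). lra.
  - rewrite (IHk ltac:(lia)) by (intros; apply H; lia). rewrite (H k) by lia. ring.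
Qed.

Lemma rsum_drop k f i : (i < k)%nat ->
  rsum k f = rsum k (fun j => if Nat.eqb j i then 0 else f j) + f i.
Proof.
  induction k; simpl; intros Hi; [lia|].
  destruct (Nat.eq_dec i k) as [->|Hne].
  - rewrite Nat.eqb_refl. rewrite (rsum_ext k (fun j => if Nat.eqb j k then 0 else f j) f). ring.
    intros j Hj. destruct (Nat.eqb_spec j k); [lia|auto].
  - rewrite IHk by lia. destruct (Nat.eqb_spec k i); [lia|]. ring.
Qed.

Lemma rsum_zero k : rsum k (fun _ => 0) = 0.
Proof. induction k; simpl; lra. Qed.

Lemma rsum_nonneg_zero k f : (forall i, (i < k)%nat -> 0 <= f i) -> rsum k f <= 0 ->
  forall i, (i < k)%nat -> f i = 0.
Proof.
  induction k; simpl; intros H Hs i Hi; [lia|].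
  assert (0 <= rsum k f). { rewrite <- (rsum_zero k).
     apply rsum_le. intros; apply H; lia. }
  assert (0 <= f k) by (apply H; lia).
  assert (f k = 0) by lra. destruct (Nat.eq_dec i k) as [->|]; auto.
  apply IHk; try lia; try lra. intros; apply H; lia.
Qed.


Lemma exp_rsum n f : exp (rsum n f) = rprod n (fun r => exp (f r)).
Proof. induction n; simpl. apply exp_0. rewrite exp_plus, IHn. ring. Qed.

Lemma exp_INR_mul a y : exp (INR a * y) = exp y ^ a.
Proof. rewrite <- Rpower_pow by apply exp_pos. unfold Rpower. rewrite ln_exp. f_equal; ring. Qed.

Lemma prod_exp n (a : nat -> nat) y :
  rprod n (fun r => exp (y r) ^ a r) = exp (rsum n (fun r => INR (a r) * y r)).
Proof. rewrite exp_rsum. apply rprod_ext. intros; symmetry; apply exp_INR_mul. Qed.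

Lemma even_col_spec n A i : even_col n A i = true -> forall r, (r < n)%nat -> Nat.even (A r i) = true.
Proof. unfold even_col. rewrite forallb_forall. intros H r Hr. apply H. apply in_seq. lia. Qed.

Lemma even_col_false n A i : even_col n A i = false -> exists r, (r < n)%nat /\ Nat.even (A r i) = false.
Proof.
  unfold even_col. intros H.
  destruct (classic (exists r, (r < n)%nat /\ Nat.even (A r i) = false)) as [?|Hn]; auto.
  exfalso. assert (forallb (fun r => Nat.even (A r i)) (seq 0 n) = true); [|congruence].
  apply forallb_forall. intros r Hr. apply in_seq in Hr.
  destruct (Nat.even (A r i)) eqn:E; auto. exfalso; apply Hn; exists r; split; [lia|auto].
Qed.

Definition Q (n m : nat) (A : nat -> nat -> nat) (d : nat -> R) (w : nat -> R) :=
  rsum m (fun i => d i * rprod n (fun r => w r ^ A r i)).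

Lemma Q_pos n m A d : (forall y, 0 <= Sig n m A d y) ->
  forall w, (forall r, (r < n)%nat -> 0 < w r) -> 0 <= Q n m A d w.
Proof.
  intros H w Hw. specialize (H (fun r => ln (w r))). unfold Sig in H. unfold Q.
  erewrite rsum_ext; [exact H|]. intros i Hi. simpl. f_equal.
  rewrite <- prod_exp. apply rprod_ext. intros r Hr. rewrite exp_ln; auto.
Qed.

Lemma cont_pow (f : R -> R) x a : continuity_pt f x -> continuity_pt (fun t => f t ^ a) x.
Proof.
  intros Hf. induction a; simpl.
  - apply continuity_pt_const. intros u v; reflexivity.
  - exact (continuity_pt_mult f (fun t => f t ^ a) x Hf IHa).
Qed.

Lemma cont_rprod k (f : nat -> R -> R) x : (forall i, continuity_pt (f i) x) ->
  continuity_pt (fun t => rprod k (fun i => f i t)) x.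
Proof.
  intros H. induction k; simpl.
  - apply continuity_pt_const. intros u v; reflexivity.
  - exact (continuity_pt_mult (fun t => rprod k (fun i => f i t)) (f k) x IHk (H k)).
Qed.

Lemma cont_rsum k (f : nat -> R -> R) x : (forall i, continuity_pt (f i) x) ->
  continuity_pt (fun t => rsum k (fun i => f i t)) x.
Proof.
  intros H. induction k; simpl.
  - apply continuity_pt_const. intros u v; reflexivity.
  - exact (continuity_pt_plus (fun t => rsum k (fun i => f i t)) (f k) x IHk (H k)).
Qed.

Lemma cont_lim (g : R -> R) : continuity_pt g 0 -> (forall t, 0 < t -> 0 <= g t) -> 0 <= g 0.
Proof.
  intros Hc Hp. destruct (Rle_lt_dec 0 (g 0)) as [|Hlt]; auto. exfalso.
  destruct (Hc (- g 0) ltac:(lra)) as [al [Hal Hx]].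
  specialize (Hx (al/2)). simpl in Hx. unfold R_dist in Hx.
  assert (0 <= g (al/2)) by (apply Hp; lra).
  assert (Rabs (g (al / 2) - g 0) < - g 0).
  { apply Hx. split. split; [exact I|lra]. rewrite Rminus_0_r, Rabs_right; lra. }
  assert (g (al/2) - g 0 <= Rabs (g (al / 2) - g 0)) by apply RRle_abs. lra.
Qed.

Lemma Q_nonneg n m A d : (forall y, 0 <= Sig n m A d y) ->
  forall z, (forall r, (r < n)%nat -> 0 <= z r) -> 0 <= Q n m A d z.
Proof.
  intros H z Hz.
  set (g := fun t => Q n m A d (fun r => z r + t)).
  assert (Q n m A d z = g 0) as ->.
  { unfold g, Q. apply rsum_ext; intros. f_equal. apply rprod_ext; intros. f_equal; ring. }
  apply cont_lim.
  - unfold g, Q. apply cont_rsum. intros i.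
    apply (continuity_pt_mult (fun _ => d i) (fun t => rprod n (fun r => (z r + t) ^ A r i))).
    + apply continuity_pt_const. intros u v; reflexivity.
    + apply (cont_rprod n (fun r t => (z r + t) ^ A r i)). intros r.
      apply (cont_pow (fun t => z r + t)).
      apply (continuity_pt_plus (fun _ => z r) id).
      * apply continuity_pt_const. intros u v; reflexivity.
      * apply derivable_continuous_pt. apply derivable_pt_id.
  - intros t Ht. apply Q_pos; auto. intros r Hr. specialize (Hz r Hr). lra.
Qed.

Lemma even_pow_abs x a : Nat.even a = true -> x ^ a = Rabs x ^ a.
Proof.
  intros He. apply Nat.even_spec in He. destruct He as [k ->].
  rewrite !pow_mult. f_equal. rewrite RPow_abs. rewrite Rabs_right; auto.
  apply Rle_ge. simpl. rewrite Rmult_1_r. apply Rle_0_sqr.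
Qed.

Lemma poly_ge n m A c : (forall y, 0 <= Sig n m A (sig_rep n A c) y) ->
  forall x, 0 <= Poly n m A c x.
Proof.
  intros H x. apply Rle_trans with (Q n m A (sig_rep n A c) (fun r => Rabs (x r))).
  - apply Q_nonneg; auto. intros; apply Rabs_pos.
  - unfold Q, Poly. apply rsum_le. intros i Hi. unfold sig_rep.
    destruct (even_col n A i) eqn:E.
    + right. f_equal. apply rprod_ext. intros r Hr. symmetry. apply even_pow_abs.
      apply (even_col_spec n A i E r Hr).
    + assert (rprod n (fun r => Rabs (x r) ^ A r i) = Rabs (rprod n (fun r => x r ^ A r i))) as ->.
      { clear. induction n; simpl. rewrite Rabs_R1; auto. rewrite IHn, Rabs_mult, RPow_abs. auto. }
      rewrite Ropp_mult_distr_l_reverse, <- Rabs_mult.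
      pose proof (Rabs_Ropp (c i * rprod n (fun r => x r ^ A r i))). pose proof (RRle_abs (- (c i * rprod n (fun r => x r ^ A r i)))). lra.
Qed.

Lemma flip_prod n r0 (a : nat -> nat) (e : nat -> R) : (r0 < n)%nat ->
  rprod n (fun r => (if Nat.eqb r r0 then - e r else e r) ^ a r) =
  (-1) ^ (a r0) * rprod n (fun r => e r ^ a r).
Proof.
  induction n; simpl; intros H; [lia|].
  destruct (Nat.eq_dec r0 n) as [->|Hne].
  - rewrite Nat.eqb_refl.
    rewrite (rprod_ext n _ (fun r => e r ^ a r)).
    + replace (- e n) with (-1 * e n) by ring. rewrite Rpow_mult_distr. ring.
    + intros r Hr. destruct (Nat.eqb_spec r n); [lia|auto].
  - rewrite IHn by lia. destruct (Nat.eqb_spec n r0); [lia|]. ring.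
Qed.

Lemma odd_pow a : Nat.even a = false -> (-1) ^ a = -1.
Proof.
  intros H. assert (Nat.odd a = true) by (rewrite <- Nat.negb_even, H; auto).
  apply Nat.odd_spec in H0. destruct H0 as [k ->]. rewrite Nat.add_1_r. apply pow_1_odd.
Qed.

Lemma even_pow a : Nat.even a = true -> (-1) ^ a = 1.
Proof. intros H. apply Nat.even_spec in H. destruct H as [k ->]. apply pow_1_even. Qed.

Lemma poly_sig n m A c y : Poly n m A c (fun r => exp (y r)) = Sig n m A c y.
Proof. unfold Poly, Sig. apply rsum_ext. intros. f_equal. apply prod_exp. Qed.

Lemma poly_age_sig n m A k c : (k < m)%nat -> C_POLY_AGE n m A k c ->
  forall y, 0 <= Sig n m A (sig_rep n A c) y.
Proof.
  intros Hk [Hp [Hs Ho]] y.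
  assert (Hrep : Sig n m A (sig_rep n A c) y =
     Sig n m A (fun i => if Nat.eqb i k then sig_rep n A c k else c i) y).
  { unfold Sig. apply rsum_ext. intros i Hi. f_equal.
    destruct (Nat.eqb_spec i k) as [->|Hne]; auto. unfold sig_rep.
    destruct (even_col n A i) eqn:E; auto. rewrite (Ho i Hi Hne E), Rabs_R0. ring. }
  rewrite Hrep. unfold sig_rep at 1.
  destruct (even_col n A k) eqn:Ek.
  -
    replace (Sig n m A (fun i => if Nat.eqb i k then c k else c i) y) with (Sig n m A c y).
    + rewrite <- poly_sig. apply Hp.
    + unfold Sig. apply rsum_ext. intros i Hi. destruct (Nat.eqb_spec i k) as [->|]; auto.
  - destruct (even_col_false n A k Ek) as [r0 [Hr0 Hodd]].
    pose (x1 := fun r => if Nat.eqb r r0 then - exp (y r) else exp (y r)).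
    assert (Hx1 : Poly n m A c x1 = Sig n m A (fun i => if Nat.eqb i k then - c k else c i) y).
    { unfold Poly, Sig, x1. apply rsum_ext. intros i Hi.
      rewrite (flip_prod n r0 (fun r => A r i) (fun r => exp (y r)) Hr0).
      rewrite prod_exp. destruct (Nat.eqb_spec i k) as [->|Hne].
      - rewrite odd_pow; auto. ring.
      - destruct (even_col n A i) eqn:E.
        + rewrite even_pow by (apply (even_col_spec n A i E); auto). ring.
        + rewrite (Ho i Hi Hne E). ring. }
    destruct (Rle_dec 0 (c k)).
    + rewrite Rabs_right by lra. rewrite <- Hx1. apply Hp.
    + rewrite Rabs_left by lra. rewrite Ropp_involutive.
      replace (Sig n m A (fun i => if Nat.eqb i k then c k else c i) y) with (Sig n m A c y).
      * rewrite <- poly_sig. apply Hp.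
      * unfold Sig. apply rsum_ext. intros i Hi. destruct (Nat.eqb_spec i k) as [->|]; auto.
Qed.

Definition Inv n m A c p (d : nat -> nat -> R) :=
  (forall k, (k < m)%nat -> C_AGE n m A k (d k)) /\
  (forall i, (i < m)%nat -> sig_rep n A c i = rsum m (fun k => d k i)) /\
  (forall i, (i < p)%nat -> (i < m)%nat -> even_col n A i = false ->
     forall k, (k < m)%nat -> k <> i -> d k i = 0).

Lemma Sig_lin n m A a b t y : Sig n m A (fun j => a j + t * b j) y = Sig n m A a y + t * Sig n m A b y.
Proof. unfold Sig. rewrite <- rsum_scal, <- rsum_plus. apply rsum_ext. intros. ring. Qed.

Lemma step n m A c p d : Inv n m A c p d -> exists d', Inv n m A c (S p) d'.
Proof.
  intros [Hage [Hsum Hz]].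
  destruct (le_lt_dec m p) as [Hmp|Hpm].
  { exists d. split; [|split]; auto. intros i Hi Hi2. apply Hz; lia. }
  destruct (even_col n A p) eqn:Ep.
  { exists d. split; [|split]; auto. intros i Hi Hi2 Ei. destruct (Nat.eq_dec i p) as [->|].
    congruence. apply Hz; auto; lia. }
  rename p into i. rename Hpm into Hi. rename Ep into Ei.
  set (s := - d i i).
  set (S' := rsum m (fun k => if Nat.eqb k i then 0 else d k i)).
  assert (HS : S' = - Rabs (c i) + s).
  { unfold S', s. pose proof (Hsum i Hi) as H. unfold sig_rep in H. rewrite Ei in H.
    rewrite (rsum_drop m _ i Hi) in H. simpl in H. lra. }
  assert (Hpos : forall k, (k < m)%nat -> k <> i -> 0 <= d k i).
  { intros k Hk Hne. destruct (Hage k Hk) as [_ Hs]. apply Hs; auto. }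
  assert (HS0 : 0 <= S').
  { unfold S'. apply Rle_trans with (rsum m (fun _ => 0)); [rewrite rsum_zero; lra|].
    apply rsum_le. intros k Hk. cbv beta.
    destruct (Nat.eqb_spec k i); [lra|]. apply Hpos; auto. }
  pose proof (Rabs_pos (c i)).
  destruct (Rle_lt_dec s 0) as [Hs0|Hs0].
  { exists d. split; [|split]; auto. intros j Hj Hjm Ej k Hk Hkj.
    destruct (Nat.eq_dec j i) as [->|].
    - assert (Hall : forall k, (k < m)%nat -> (if Nat.eqb k i then 0 else d k i) = 0).
      { apply rsum_nonneg_zero. intros k' Hk'. destruct (Nat.eqb_spec k' i); [lra|]. apply Hpos; auto.
        fold S'. lra. }
      specialize (Hall k Hk). destruct (Nat.eqb_spec k i); [congruence|auto].
    - apply Hz; auto; lia. }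
  set (u := fun k => if Nat.eqb k i then - (S' / s) else d k i / s).
  exists (fun k j => d k j + u k * d i j).
  assert (Hui : 0 <= 1 + u i).
  { unfold u. rewrite Nat.eqb_refl. assert (S' / s <= 1). { apply Rmult_le_reg_r with s; auto.
      unfold Rdiv. rewrite Rmult_assoc, Rinv_l by lra. lra. } lra. }
  assert (Huk : forall k, (k < m)%nat -> k <> i -> 0 <= u k).
  { intros k Hkm Hk. unfold u. destruct (Nat.eqb_spec k i); [congruence|].
    unfold Rdiv; apply Rmult_le_pos; [auto| left; apply Rinv_0_lt_compat; lra]. }
  assert (Hdk : forall k, (k < m)%nat -> k <> i -> d k i + u k * d i i = 0).
  { intros k Hkm Hk. unfold u. destruct (Nat.eqb_spec k i); [congruence|].
    fold s. replace (d i i) with (- s) by (unfold s; ring). field. lra. }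
  assert (Hu0 : rsum m u = 0).
  { rewrite (rsum_drop m u i Hi).
    rewrite (rsum_ext m _ (fun k => / s * (if Nat.eqb k i then 0 else d k i))).
    - rewrite rsum_scal. fold S'. unfold u. rewrite Nat.eqb_refl. field. lra.
    - intros k Hk. unfold u. destruct (Nat.eqb_spec k i); [ring|]. unfold Rdiv. ring. }
  split; [|split].
  - intros k Hk. destruct (Hage k Hk) as [Hn Hs]. destruct (Hage i Hi) as [Hni Hsi]. split.
    + intros y. unfold C_NNS in *. rewrite Sig_lin.
      destruct (Nat.eq_dec k i) as [->|Hki].
      * replace (Sig n m A (d i) y + u i * Sig n m A (d i) y) with ((1 + u i) * Sig n m A (d i) y) by ring.
        apply Rmult_le_pos; auto.
      * pose proof (Hn y). pose proof (Hni y). pose proof (Huk k Hk Hki). nra.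
    + intros j Hj Hjk. destruct (Nat.eq_dec k i) as [->|Hki].
      * replace (d i j + u i * d i j) with ((1 + u i) * d i j) by ring. apply Rmult_le_pos; auto.
      * destruct (Nat.eq_dec j i) as [->|Hji].
        -- rewrite Hdk; auto. lra.
        -- pose proof (Hs j Hj Hjk). pose proof (Hsi j Hj Hji). pose proof (Huk k Hk Hki). nra.
  - intros j Hj. rewrite rsum_plus. rewrite (rsum_ext m (fun k => u k * d i j) (fun k => d i j * u k))
      by (intros; ring). rewrite rsum_scal, Hu0. rewrite <- Hsum by auto. ring.
  - intros j Hj Hjm Ej k Hk Hkj. destruct (Nat.eq_dec j i) as [->|Hji].
    + apply Hdk; auto.
    + rewrite (Hz j ltac:(lia) Hjm Ej k Hk Hkj). rewrite (Hz j ltac:(lia) Hjm Ej i Hi ltac:(lia)). ring.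
Qed.

Theorem mainTheorem16 (n m : nat) (A : nat -> nat -> nat)
  (hA : distinct_cols n m A) (c : nat -> R) :
  cone_sum m (C_POLY_AGE n m A) c <-> C_POLY_SAGE n m A c.
Proof.
  split.
  - intros [cs [Hcs Hsum]]. exists (fun k => sig_rep n A (cs k)). split.
    + intros k Hk. split.
      * intros y. apply (poly_age_sig n m A k); auto.
      * intros i Hi Hik. destruct (Hcs k Hk) as [_ [Hs Ho]]. unfold sig_rep.
        destruct (even_col n A i) eqn:E; auto. rewrite (Ho i Hi Hik E), Rabs_R0. lra.
    + intros i Hi. unfold sig_rep at 1. destruct (even_col n A i) eqn:E.
      * rewrite Hsum by auto. apply rsum_ext. intros k Hk. unfold sig_rep. rewrite E. auto.
      * assert (Hz : forall k, (k < m)%nat -> k <> i -> cs k i = 0).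
        { intros k Hk Hki. destruct (Hcs k Hk) as [_ [_ Ho]]. apply Ho; auto. }
        rewrite Hsum by auto. rewrite (rsum_single m _ i Hi) by auto.
        rewrite (rsum_single m _ i Hi). unfold sig_rep; rewrite E; auto.
        intros k Hk Hki. unfold sig_rep; rewrite E. rewrite Hz by auto. rewrite Rabs_R0. ring.
  - intros [d0 [Hd0 Hs0]].
    assert (Hall : forall p, exists d, Inv n m A c p d).
    { induction p.
      - exists d0. split; [|split]; auto. intros; lia.
      - destruct IHp as [d Hd]. exact (step n m A c p d Hd). }
    destruct (Hall m) as [d [Hage [Hsum Hz]]].
    exists (fun k i => if even_col n A i then d k i else (if Nat.eqb k i then c i else 0)).
    split.
    + intros k Hk. split; [|split].
      * apply poly_ge. intros y.
        replace (Sig n m A (sig_rep n A (fun i => if even_col n A i then d k i else (if Nat.eqb k i then c i else 0))) y)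
          with (Sig n m A (d k) y).
        -- apply (Hage k Hk).
        -- unfold Sig. apply rsum_ext. intros i Hi. f_equal. unfold sig_rep.
           destruct (even_col n A i) eqn:E; auto.
           destruct (Nat.eqb_spec k i) as [->|Hki].
           ++ pose proof (Hsum i Hi) as H. unfold sig_rep in H. rewrite E in H. rewrite H.
              symmetry. apply (rsum_single m (fun k => d k i)); auto.
           ++ rewrite Rabs_R0, Ropp_0. apply Hz; auto.
      * intros i Hi Hik. destruct (even_col n A i) eqn:E.
        -- apply (Hage k Hk); auto.
        -- destruct (Nat.eqb_spec k i); [congruence|lra].
      * intros i Hi Hik E. rewrite E. destruct (Nat.eqb_spec k i); [congruence|auto].
    + intros i Hi. destruct (even_col n A i) eqn:E.
      * pose proof (Hsum i Hi) as H. unfold sig_rep in H. rewrite E in H. auto.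
      * rewrite (rsum_single m _ i Hi). rewrite Nat.eqb_refl; auto.
        intros k Hk Hki. destruct (Nat.eqb_spec k i); [congruence|auto].
Qed.
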